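(* (a) There are at most countably many homeomorphism classes of spaces $(\mathbb{R},\tau)$ with $\tau\in\mathcal{T}$ and $(\mathbb{R},\tau)$ locally connected. (b) If $\tau\in\mathcal{T}$ and $(\mathbb{R},\tau)$ is locally connected and separable, then there is a real function $F$ with $\tau=\tau[F]$, and the set $\Gamma(\tau)$ is countable and closed in the Euclidean topology.
   Context: $\eta$ denotes the Euclidean topology on $\mathbb{R}$; $\mathcal{T}$ is the family of all topologies on $\mathbb{R}$ finer than $\eta$. $\Gamma(\tau)=\{x\in\mathbb{R}:\mathcal{U}_\eta(x)\neq\mathcal{U}_\tau(x)\}$ where $\mathcal{U}_\tau(x)$ is the neighborhood filter of $x$. For a function $F:\mathbb{R}\to\mathbb{R}$, $\tau[F]$ is the topology on $\mathbb{R}$ in which $U\subset\mathbb{R}$ is open iff $U=\{x\in\mathbb{R} : (x,F(x))\in V\}$ for some open $V\subset\mathbb{R}^2$; equivalently, the unique topology making $x\mapsto(x,F(x))$ a homeomorphism onto the graph of $F$ with its subspace topology from $\mathbb{R}^2$. *)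

(* Defs.v *)
(* the real line is an arbitrary realType R,
   with its Euclidean topology [open]/[closed]; R * R carries the product
   (= Euclidean) topology. *)
From HB Require Import structures.
From mathcomp Require Import all_boot all_order all_algebra.
From mathcomp Require Import all_classical all_reals.
From mathcomp Require Import topology normedtype.
Set Implicit Arguments. Unset Strict Implicit. Unset Printing Implicit Defensive.
Import Order.TTheory GRing.Theory Num.Theory.
Local Open Scope classical_set_scope.
Local Open Scope ring_scope.

Section Defs.
Variable R : realType.

Definition is_topology (tau : set (set R)) : Prop :=
  [/\ tau setT, tau set0,
      (forall U V, tau U -> tau V -> tau (U `&` V)) &
      (forall S : set (set R), S `<=` tau -> tau (\bigcup_(A in S) A))].

Definition eta : set (set R) := [set U | @open R^o U].

Definition finer_than_eta (tau : set (set R)) : Prop :=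
  is_topology tau /\ eta `<=` tau.

Definition nbhd_of (tau : set (set R)) (x : R) (N : set R) : Prop :=
  exists V, [/\ tau V, V x & V `<=` N].

Definition connected_in (tau : set (set R)) (A : set R) : Prop :=
  ~ exists U1 U2, [/\ tau U1, tau U2, A `<=` U1 `|` U2,
                     A `&` U1 `&` U2 = set0 &
                     (A `&` U1 !=set0 /\ A `&` U2 !=set0)].

Definition locally_connected_top (tau : set (set R)) : Prop :=
  forall x U, tau U -> U x ->
    exists N, [/\ nbhd_of tau x N, N `<=` U & connected_in tau N].

Definition separable_top (tau : set (set R)) : Prop :=
  exists D : set R, countable D /\
    forall U, tau U -> U !=set0 -> U `&` D !=set0.

Definition homeomorphic_top (tau1 tau2 : set (set R)) : Prop :=
  exists h g : R -> R, [/\ cancel h g, cancel g h,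
     (forall U, tau2 U -> tau1 (h @^-1` U)) &
     (forall U, tau1 U -> tau2 (g @^-1` U))].

Definition Gamma (tau : set (set R)) : set R :=
  [set x | ~ (forall N, nbhd_of eta x N <-> nbhd_of tau x N)].

Definition tau_of (F : R -> R) : set (set R) :=
  [set U | exists V : set (R^o * R^o)%type, open V /\ U = [set x | V (x, F x)]].

End Defs.

(* Main.v *)
Require Import Defs.
From HB Require Import structures.
From mathcomp Require Import all_boot all_order all_algebra.
From mathcomp Require Import all_classical all_reals.
From mathcomp Require Import topology normedtype.
From mathcomp.algebra_tactics Require Import lra ring.

Module MB.
Import Order.TTheory GRing.Theory Num.Theory.
Local Open Scope classical_set_scope.
Local Open Scope ring_scope.
Set Implicit Arguments. Unset Strict Implicit.

Section Comp.
Variable R : realType.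
Local Notation Eta := (@Defs.eta R).

Lemma etaP (U : set R) :
  (forall x, U x -> exists2 e, 0 < e & forall y, `|y - x| < e -> U y) -> Eta U.
Proof.
move=> H; rewrite /Defs.eta /=; rewrite openE => x /H [e e0 He].
apply/nbhs_ballP; exists e => // y; rewrite -ball_normE /= => hy.
by apply: He; rewrite distrC.
Qed.

Lemma etaE (U : set R) : Eta U -> forall x, U x -> exists2 e, 0 < e & forall y, `|y - x| < e -> U y.
Proof.
rewrite /Defs.eta /= openE => H x /H /nbhs_ballP [e e0 He]; exists e => // y hy.
by apply: He; rewrite -ball_normE /= distrC.
Qed.

Lemma eta_lt c : Eta [set y | y < c].
Proof.
apply: etaP => x /= xc; exists (c - x); first lra.
by move=> y; rewrite ltr_distl => /andP[h1 h2]; lra.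
Qed.

Lemma eta_gt c : Eta [set y | c < y].
Proof.
apply: etaP => x /= xc; exists (x - c); first lra.
by move=> y; rewrite ltr_distl => /andP[h1 h2]; lra.
Qed.

Lemma eta_ball x e : Eta [set y | `|y - x| < e].
Proof.
apply: etaP => z /= hz; exists (e - `|z - x|); first lra.
move=> y hy; have := ler_distD z y x; lra.
Qed.

Variable tau : set (set R).
Hypothesis Htop : is_topology tau.
Hypothesis Hfin : Eta `<=` tau.
Hypothesis Hlc : locally_connected_top tau.

Lemma tauT : tau setT. Proof. by case: Htop. Qed.
Lemma tauI U V : tau U -> tau V -> tau (U `&` V).
Proof. by case: Htop => _ _ h _; apply: h. Qed.
Lemma tau_bigcup (S : set (set R)) : S `<=` tau -> tau (\bigcup_(A in S) A).
Proof. by case: Htop => _ _ _ h; apply: h. Qed.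

Lemma tau_local W : (forall x, W x -> exists V, [/\ tau V, V x & V `<=` W]) -> tau W.
Proof.
move=> H.
have -> : W = \bigcup_(V in [set V | tau V /\ V `<=` W]) V.
  apply/seteqP; split => [x Wx|x [V [_ VW] Vx]]; last exact: VW.
  by have [V [tV Vx VW]] := H x Wx; exists V.
by apply: tau_bigcup => V [].
Qed.

Lemma tauU U V : tau U -> tau V -> tau (U `|` V).
Proof.
move=> tU tV; apply: tau_local => x [Ux|Vx]; [exists U|exists V]; split => // y; by [left|right].
Qed.

Definition conn A := connected_in tau A.

Lemma sepF A B U1 U2 a b : conn A -> A `<=` B -> tau U1 -> tau U2 ->
  B `<=` U1 `|` U2 -> B `&` U1 `&` U2 = set0 -> A a -> U1 a -> A b -> U2 b -> False.
Proof.
move=> cA AB t1 t2 cov dis Aa U1a Ab U2b; apply: cA; exists U1, U2; split => //.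
- by move=> y /AB /cov.
- apply/seteqP; split => // y [[Ay U1y] U2y]; rewrite -dis; split => //; split => //.
  exact: AB.
- by split; [exists a|exists b].
Qed.

Lemma conn_convex A a b z : conn A -> A a -> A b -> a < z -> z < b -> A z.
Proof.
move=> cA Aa Ab az zb; apply: contrapT => nAz.
apply: (sepF (B := A) (U1 := [set y | y < z]) (U2 := [set y | z < y]) cA _ _ _ _ _ Aa _ Ab) => //.
- apply: Hfin; exact: eta_lt.
- apply: Hfin; exact: eta_gt.
- move=> y Ay; case: (ltgtP y z) => [yz|zy|yz]; [by left|by right|by subst].
- apply/seteqP; split => // y [[_ /= h1] /= h2]; have := lt_trans h1 h2; by rewrite ltxx.
Qed.

Lemma conn1 x : conn [set x].
Proof.
move=> [U1 [U2 [_ _ _ h [[y [/= yx U1y]] [z [/= zx U2z]]]]]]; subst y z.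
by have : ([set x] `&` U1 `&` U2) x by []; rewrite h.
Qed.

Lemma connU A B x : conn A -> conn B -> A x -> B x -> conn (A `|` B).
Proof.
move=> cA cB Ax Bx [U1 [U2 [t1 t2 cov dis [[y [ABy U1y]] [z [ABz U2z]]]]]].
have sA : A `<=` A `|` B by move=> ? ?; left.
have sB : B `<=` A `|` B by move=> ? ?; right.
case: (cov x (sA _ Ax)) => [U1x|U2x].
- case: ABz => [Az|Bz].
  + exact: (sepF cA sA t1 t2 cov dis Ax U1x Az U2z).
  + exact: (sepF cB sB t1 t2 cov dis Bx U1x Bz U2z).
- case: ABy => [Ay|By].
  + exact: (sepF cA sA t1 t2 cov dis Ay U1y Ax U2x).
  + exact: (sepF cB sB t1 t2 cov dis By U1y Bx U2x).
Qed.

Definition cmp x := [set y | exists A, [/\ conn A, A x & A y]].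

Lemma comp_refl x : cmp x x.
Proof. by exists [set x]; split => //; apply: conn1. Qed.

Lemma comp_sym x y : cmp x y -> cmp y x.
Proof. by move=> [A [cA Ax Ay]]; exists A. Qed.

Lemma comp_trans x y z : cmp x y -> cmp y z -> cmp x z.
Proof.
move=> [A [cA Ax Ay]] [B [cB By Bz]]; exists (A `|` B); split.
- exact: (connU cA cB Ay By).
- by left.
- by right.
Qed.

Lemma comp_eq x y : cmp x y -> cmp x = cmp y.
Proof.
move=> cxy; apply/seteqP; split => z h.
- exact: comp_trans (comp_sym cxy) h.
- exact: comp_trans cxy h.
Qed.

Lemma comp_convex x a b z : cmp x a -> cmp x b -> a < z -> z < b -> cmp x z.
Proof.
move=> ca cb az zb.
have [A [cA Aa Ab]] := comp_trans (comp_sym ca) cb.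
apply: comp_trans ca _; exists A; split => //.
exact: conn_convex cA Aa Ab az zb.
Qed.

Lemma conn_sub_comp N x : conn N -> N x -> N `<=` cmp x.
Proof. by move=> cN Nx y Ny; exists N. Qed.

Lemma comp_open x : tau (cmp x).
Proof.
apply: tau_local => y cy.
have [N [[V [tV Vy VN]] _ cN]] := Hlc tauT (I : setT y).
exists V; split => // z /VN Nz.
rewrite (comp_eq cy); exact: conn_sub_comp cN (VN _ Vy) _ Nz.
Qed.

Lemma local x W : tau W -> W x ->
  exists2 d, 0 < d & forall y, `|y - x| < d -> cmp x y -> W y.
Proof.
move=> tW Wx.
have [N [[V [tV Vx VN]] NW cN]] := Hlc tW Wx.
have Nx := VN _ Vx.
have [d1 d10 H1] : exists2 d1, 0 < d1 &
    forall y, y < x -> x - d1 < y -> cmp x y -> W y.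
  case: (pselect (exists a, a < x /\ N a)) => [[a [ax Na]]|nL].
  - exists (x - a); first lra.
    move=> y yx ay _; apply: NW; apply: (conn_convex cN Na Nx) => //; lra.
  - exists 1 => // y yx _ [A [cA Ax Ay]]; exfalso.
    apply: (sepF (B := A) (U1 := [set z | z < x]) (U2 := V `|` [set z | x < z])
       cA _ _ _ _ _ Ay _ Ax) => //.
    + apply: Hfin; exact: eta_lt.
    + by apply: tauU => //; apply: Hfin; exact: eta_gt.
    + move=> z Az; case: (ltgtP z x) => [zx|xz|->]; [by left|by right; right|by right; left].
    + apply/seteqP; split => // z [[_ /= zx] [Vz|/= xz]].
      * by apply: nL; exists z; split => //; exact: VN.
      * by have := lt_trans zx xz; rewrite ltxx.
    + by left.
have [d2 d20 H2] : exists2 d2, 0 < d2 &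
    forall y, x < y -> y < x + d2 -> cmp x y -> W y.
  case: (pselect (exists b, x < b /\ N b)) => [[b [xb Nb]]|nR].
  - exists (b - x); first lra.
    move=> y xy yb _; apply: NW; apply: (conn_convex cN Nx Nb) => //; lra.
  - exists 1 => // y xy _ [A [cA Ax Ay]]; exfalso.
    apply: (sepF (B := A) (U1 := [set z | x < z]) (U2 := V `|` [set z | z < x])
       cA _ _ _ _ _ Ay _ Ax) => //.
    + apply: Hfin; exact: eta_gt.
    + by apply: tauU => //; apply: Hfin; exact: eta_lt.
    + move=> z Az; case: (ltgtP z x) => [zx|xz|->]; [by right; right|by left|by right; left].
    + apply/seteqP; split => // z [[_ /= xz] [Vz|/= zx]].
      * by apply: nR; exists z; split => //; exact: VN.
      * by have := lt_trans zx xz; rewrite ltxx.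
    + by left.
exists (Num.min d1 d2); first by rewrite lt_min d10 d20.
move=> y; rewrite lt_min => /andP[h1 h2] cy.
case: (ltgtP y x) => [yx|xy|->] //.
- apply: H1 => //; move: h1; rewrite ltr_distl => /andP[? ?]; lra.
- apply: H2 => //; move: h2; rewrite ltr_distl => /andP[? ?]; lra.
Qed.

Lemma tau_char W : (forall x, W x ->
  exists2 d, 0 < d & forall y, `|y - x| < d -> cmp x y -> W y) -> tau W.
Proof.
move=> H; apply: tau_local => x Wx; have [d d0 Hd] := H x Wx.
exists ([set y | `|y - x| < d] `&` cmp x); split.
- by apply: tauI; [apply: Hfin; exact: eta_ball|exact: comp_open].
- by split; [rewrite /= subrr normr0|exact: comp_refl].
- by move=> y [/= h1 h2]; exact: Hd.
Qed.

Definition inner x := exists2 d, 0 < d & forall y, `|y - x| < d -> cmp x y.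

Lemma GammaE : Gamma tau = ~` inner.
Proof.
apply/seteqP; split => x.
- move=> G [d d0 Hd]; apply: G => N; split.
  + by move=> [V [eV Vx VN]]; exists V; split => //; exact: Hfin.
  + move=> [V [tV Vx VN]]; have [d' d'0 Hd'] := local tV Vx.
    exists [set y | `|y - x| < Num.min d d']; split.
    * exact: eta_ball.
    * by rewrite /= subrr normr0 lt_min d0 d'0.
    * move=> y /=; rewrite lt_min => /andP[h1 h2]; apply: VN; apply: Hd' => //.
      exact: Hd.
- move=> nI H; apply: nI.
  have : nbhd_of tau x (cmp x) by exists (cmp x); split => //; [exact: comp_open|exact: comp_refl].
  move/H => [V [eV Vx VC]]; have [e e0 He] := etaE eV Vx.
  by exists e => // y /He /VC.
Qed.

Lemma inner_open : Eta inner.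
Proof.
apply: etaP => x [d d0 Hd]; exists d => // y hy.
exists (d - `|y - x|); first lra.
move=> z hz; have := ler_distD y z x => h.
have cxz : cmp x z by apply: Hd; lra.
exact: comp_trans (comp_sym (Hd y hy)) cxz.
Qed.

Lemma Gamma_closed : @closed R^o (Gamma tau).
Proof. by rewrite GammaE; apply: open_closedC; exact: inner_open. Qed.

Lemma Gamma_side x : Gamma tau x ->
  (forall y, cmp x y -> x <= y) \/ (forall y, cmp x y -> y <= x).
Proof.
rewrite GammaE => nI; apply: contrapT => /not_orP [/existsNP [a /not_implyP [ca /negP]]].
rewrite -ltNge => ax /existsNP [b /not_implyP [cb /negP]]; rewrite -ltNge => xb.
apply: nI; exists (Num.min (x - a) (b - x)); first by rewrite lt_min !subr_gt0 ax xb.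
move=> y; rewrite lt_min => /andP[h1 h2].
case: (ltgtP y x) => [yx|xy|->]; last exact: comp_refl.
- apply: (comp_convex ca (comp_refl x)) => //; move: h1; rewrite ltr_distl => /andP[? ?]; lra.
- apply: (comp_convex (comp_refl x) cb) => //; move: h2; rewrite ltr_distl => /andP[? ?]; lra.
Qed.

Variable D : set R.
Hypothesis Dcount : countable D.
Hypothesis Ddense : forall U, tau U -> U !=set0 -> U `&` D !=set0.

Definition rep x := xget 0 (cmp x `&` D).

Lemma rep_spec x : cmp x (rep x) /\ D (rep x).
Proof.
rewrite /rep; have [y [cy Dy]] := Ddense (comp_open x) (ex_intro _ x (comp_refl x)).
by apply: (@xgetPex _ 0 (cmp x `&` D)); exists y.
Qed.

Definition fD := projT1 (cid (elimT (countable_injP D) Dcount)).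
Lemma fD_inj : {in D &, injective fD}.
Proof. exact: (projT2 (cid (elimT (countable_injP D) Dcount))). Qed.

Definition idx x := fD (rep x).

Lemma idx_comp x y : cmp x y -> idx x = idx y.
Proof. by move=> /comp_eq; rewrite /idx /rep => ->. Qed.

Lemma comp_idx x y : idx x = idx y -> cmp x y.
Proof.
move=> h; have [cx Dx] := rep_spec x; have [cy Dy] := rep_spec y.
have e : rep x = rep y by apply: fD_inj => //; rewrite inE.
by apply: comp_trans cx _; rewrite e; exact: comp_sym.
Qed.

Lemma Gamma_countable : countable (Gamma tau).
Proof.
apply/countable_injP.
exists (fun x => pickle (idx x, `[< forall y, cmp x y -> x <= y >])).
move=> x y; rewrite !inE => Gx Gy /(pcan_inj pickleK) [/comp_idx cxy eb].
have cyx := comp_sym cxy.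
case: (pselect (forall z, cmp x z -> x <= z)) => hx.
- have hy : forall z, cmp y z -> y <= z.
    by apply/asboolP; rewrite -eb; apply/asboolP.
  by apply/le_anti; rewrite hx // hy.
- have hy : ~ (forall z, cmp y z -> y <= z).
    by move=> hy; apply: hx; apply/asboolP; rewrite eb; apply/asboolP.
  case: (Gamma_side Gx) => // hx'; case: (Gamma_side Gy) => // hy'.
  by apply/le_anti; rewrite hx' // hy'.
Qed.

Definition F x : R := (idx x)%:R.

Lemma natr_near (m n : nat) : `|(m%:R : R) - n%:R| < 1 -> m = n.
Proof.
move=> H; case: (ltngtP m n) => // h; exfalso.
- have : (m.+1%:R : R) <= n%:R by rewrite ler_nat.
  rewrite -natr1 => h1; move: H; rewrite distrC ger0_norm; lra.
- have : (n.+1%:R : R) <= m%:R by rewrite ler_nat.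
  rewrite -natr1 => h1; move: H; rewrite ger0_norm; lra.
Qed.

Lemma tau_graph : tau = tau_of F.
Proof.
apply/seteqP; split => W.
- move=> tW.
  pose V : set (R^o * R^o)%type := [set p | exists2 e, 0 < e &
     forall y, `|y - p.1| < e -> `|F y - p.2| < e -> W y].
  exists V; split.
  + rewrite openE => p [e e0 He]; apply/nbhs_ballP; exists (e / 2); first by rewrite /=; lra.
    move=> q [/= q1 q2]; exists (e / 2); first lra.
    move: q1 q2; rewrite -!ball_normE /= => q1 q2 y h1 h2; apply: He.
    * have := ler_distD q.1 y p.1; have := @distrC _ R q.1 p.1; lra.
    * have := ler_distD q.2 (F y) p.2; have := @distrC _ R q.2 p.2; lra.
  + apply/seteqP; split => x /=.
    * move=> Wx; have [d d0 Hd] := local tW Wx.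
      exists (Num.min d 1); first by rewrite lt_min d0 ltr01.
      move=> y; rewrite !lt_min => /andP[h1 _] /andP[_ h2]; apply: Hd => //; move: h1 h2 => /= h1 h2.
      by apply: comp_idx; symmetry; apply: natr_near.
    * move=> [e e0 He]; apply: He; by rewrite subrr normr0.
- move=> [V [oV ->]]; apply: tau_char => x /= Vx.
  move: oV; rewrite openE => /(_ _ Vx) /nbhs_ballP [e e0 He].
  exists e => // y hy cy; apply: He; split => /=; rewrite -ball_normE /=.
  + by rewrite distrC.
  + by rewrite /F (idx_comp cy) subrr normr0.
Qed.

End Comp.

End MB.
Import MB.

Module MC.
Import Order.TTheory GRing.Theory Num.Theory.
Local Open Scope classical_set_scope.
Local Open Scope ring_scope.
Set Implicit Arguments. Unset Strict Implicit.

Section Charts.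
Variable R : realType.
Implicit Types x y s t : R.

Definition phi x : R := x / (1 + `|x|).
Definition iphi s : R := s / (1 - `|s|).

Lemma normC x : (`|x| = x /\ 0 <= x) \/ (`|x| = - x /\ x < 0).
Proof.
case: (lerP 0 x) => h; [left; split => //; exact: ger0_norm|right; split => //; exact: ltr0_norm].
Qed.

Lemma phi_bnd x : -1 < phi x < 1.
Proof.
rewrite /phi; have h0 : 0 < 1 + `|x| by have := normr_ge0 x; lra.
rewrite ltr_pdivlMr // ltr_pdivrMr //.
by case: (normC x) => [[-> h]|[-> h]]; apply/andP; split; lra.
Qed.

Lemma phi_mono x y : x < y -> phi x < phi y.
Proof.
move=> xy; rewrite -subr_gt0.
have hx : 0 < 1 + `|x| by have := normr_ge0 x; lra.
have hy : 0 < 1 + `|y| by have := normr_ge0 y; lra.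
have -> : phi y - phi x = (y * (1 + `|x|) - x * (1 + `|y|)) / ((1 + `|x|) * (1 + `|y|)).
  rewrite /phi; field; apply/andP; split; rewrite gt_eqF //.
apply: divr_gt0; last exact: mulr_gt0.
case: (normC x) => [[-> h1]|[-> h1]]; case: (normC y) => [[-> h2]|[-> h2]]; nra.
Qed.

Lemma phi_le x y : x <= y -> phi x <= phi y.
Proof. by rewrite le_eqVlt => /orP[/eqP->//|/phi_mono/ltW]. Qed.

Lemma phi_lt_inv x y : phi x < phi y -> x < y.
Proof. by apply: contraTT; rewrite -!leNgt; exact: phi_le. Qed.

Lemma phi_le_inv x y : phi x <= phi y -> x <= y.
Proof. by apply: contraTT; rewrite -!ltNge; exact: phi_mono. Qed.

Lemma phiK x : iphi (phi x) = x.
Proof.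
have hx : 0 < 1 + `|x| by have := normr_ge0 x; lra.
rewrite /iphi.
have -> : `|phi x| = `|x| / (1 + `|x|) by rewrite /phi normrM normfV (gtr0_norm hx).
rewrite /phi; field; apply/andP; split; [by rewrite gt_eqF|by rewrite addrK oner_neq0].
Qed.

Lemma iphiK s : -1 < s < 1 -> phi (iphi s) = s.
Proof.
move=> /andP[h1 h2].
have hs : 0 < 1 - `|s| by case: (normC s) => [[-> ?]|[-> ?]]; lra.
rewrite /phi.
have -> : `|iphi s| = `|s| / (1 - `|s|) by rewrite /iphi normrM normfV (gtr0_norm hs).
rewrite /iphi; field; apply/andP; split; [by rewrite gt_eqF|by rewrite subrK oner_neq0].
Qed.

Lemma iphi_mono s t : -1 < s < 1 -> -1 < t < 1 -> s < t -> iphi s < iphi t.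
Proof. by move=> hs ht st; apply: phi_lt_inv; rewrite !iphiK. Qed.


Definition convex (C : set R) := forall a b z, C a -> C b -> a < z -> z < b -> C z.
Definition nondeg (C : set R) := exists y z, [/\ C y, C z & y < z].
Definition lo (C : set R) := inf (phi @` C).
Definition hi (C : set R) := sup (phi @` C).
Definition hasMin (C : set R) := exists2 m, C m & forall y, C y -> m <= y.
Definition hasMax (C : set R) := exists2 m, C m & forall y, C y -> y <= m.
Definition trans (C C' : set R) x :=
  iphi (lo C' + (phi x - lo C) / (hi C - lo C) * (hi C' - lo C')).

Section Chart.
Variable C : set R.
Hypothesis cC : convex C.
Hypothesis nC : nondeg C.

Lemma phiC_ne : (phi @` C) !=set0.
Proof. by case: nC => y [z [Cy _ _]]; exists (phi y), y. Qed.

Lemma hsup : has_sup (phi @` C).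
Proof.
split; first exact: phiC_ne.
by exists 1 => _ [y _ <-]; have := phi_bnd y => /andP[_ /ltW].
Qed.

Lemma hinf : has_inf (phi @` C).
Proof.
split; first exact: phiC_ne.
by exists (-1) => _ [y _ <-]; have := phi_bnd y => /andP[/ltW ? _].
Qed.

Lemma lo_le y : C y -> lo C <= phi y.
Proof. by move=> Cy; apply: (ge_inf hinf.2); exists y. Qed.

Lemma le_hi y : C y -> phi y <= hi C.
Proof. by move=> Cy; apply: (sup_upper_bound hsup); exists y. Qed.

Lemma lo_ge : -1 <= lo C.
Proof.
apply: lb_le_inf; first exact: phiC_ne.
by move=> _ [y _ <-]; have := phi_bnd y => /andP[/ltW ? _].
Qed.

Lemma hi_le : hi C <= 1.
Proof.
apply: ge_sup; first exact: phiC_ne.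
by move=> _ [y _ <-]; have := phi_bnd y => /andP[_ /ltW].
Qed.

Lemma lo_lt_hi : lo C < hi C.
Proof.
case: nC => y [z [Cy Cz yz]].
by apply: le_lt_trans (lo_le Cy) (lt_le_trans (phi_mono yz) (le_hi Cz)).
Qed.

Lemma mid_mem s : lo C < s -> s < hi C -> C (iphi s).
Proof.
move=> h1 h2.
have [_ [c1 Cc1 <-] e1] := inf_adherent (eps := s - lo C) ltac:(lra) hinf.
have [_ [c2 Cc2 <-] e2] := sup_adherent (eps := hi C - s) ltac:(lra) hsup.
have hs : -1 < s < 1 by have := lo_ge; have := hi_le; move=> ? ?; apply/andP; split; lra.
move: e1 e2; rewrite -/(lo C) -/(hi C) => e1 e2.
apply: (cC Cc1 Cc2); apply: phi_lt_inv; rewrite iphiK //; lra.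
Qed.

Lemma lo_min m : C m -> phi m = lo C -> forall y, C y -> m <= y.
Proof. by move=> Cm e y Cy; apply: phi_le_inv; rewrite e; exact: lo_le. Qed.

Lemma min_lo m : C m -> (forall y, C y -> m <= y) -> phi m = lo C.
Proof.
move=> Cm H; apply/le_anti/andP; split; last exact: lo_le.
by apply: lb_le_inf; [exact: phiC_ne|move=> _ [y Cy <-]; apply: phi_le; exact: H].
Qed.

Lemma hi_max m : C m -> phi m = hi C -> forall y, C y -> y <= m.
Proof. by move=> Cm e y Cy; apply: phi_le_inv; rewrite e; exact: le_hi. Qed.

Lemma max_hi m : C m -> (forall y, C y -> y <= m) -> phi m = hi C.
Proof.
move=> Cm H; apply/le_anti/andP; split; first exact: le_hi.
by apply: ge_sup; [exact: phiC_ne|move=> _ [y Cy <-]; apply: phi_le; exact: H].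
Qed.
End Chart.


Section Trans.
Variables C C' : set R.
Hypotheses (cC : convex C) (nC : nondeg C) (cC' : convex C') (nC' : nondeg C').
Hypothesis tMin : hasMin C <-> hasMin C'.
Hypothesis tMax : hasMax C <-> hasMax C'.

Let t x := (phi x - lo C) / (hi C - lo C).
Let s' x := lo C' + t x * (hi C' - lo C').

Lemma trans_val x : C x -> -1 < s' x < 1 /\ C' (iphi (s' x)).
Proof.
move=> Cx; have d0 := lo_lt_hi nC; have d0' := lo_lt_hi nC'.
have l1 := lo_ge nC'; have h1 := hi_le nC'.
case: (eqVneq (phi x) (lo C)) => [el|nel].
  have [m Cm mm] : hasMin C' by apply/tMin; exists x => // y Cy; exact: (lo_min nC Cx el Cy).
  have e : s' x = phi m by rewrite (min_lo nC' Cm mm) /s' /t el subrr mul0r mul0r addr0.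
  by rewrite e phiK; split => //; exact: phi_bnd.
case: (eqVneq (phi x) (hi C)) => [eh|neh].
  have [m Cm mm] : hasMax C' by apply/tMax; exists x => // y Cy; exact: (hi_max nC Cx eh Cy).
  have e : s' x = phi m.
    by rewrite (max_hi nC' Cm mm) /s' /t eh divff; [rewrite mul1r; ring|rewrite gt_eqF // subr_gt0].
  by rewrite e phiK; split => //; exact: phi_bnd.
have lx : lo C < phi x by rewrite lt_neqAle eq_sym nel (lo_le nC Cx).
have xh : phi x < hi C by rewrite lt_neqAle neh (le_hi nC Cx).
have t0 : 0 < t x by apply: divr_gt0; lra.
have t1 : t x < 1 by rewrite /t ltr_pdivrMr ?mul1r; lra.
have p1 : 0 < t x * (hi C' - lo C') by apply: mulr_gt0; lra.
have p2 : t x * (hi C' - lo C') < hi C' - lo C'.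
  by rewrite -[X in _ < X]mul1r ltr_pM2r //; lra.
have hs : lo C' < s' x < hi C' by rewrite /s'; apply/andP; split; lra.
split; first by apply/andP; split; lra.
by case/andP: hs => ha hb; exact: (mid_mem cC' nC' ha hb).
Qed.

Lemma trans_mem x : C x -> C' (trans C C' x).
Proof. by move=> /trans_val []. Qed.

Lemma phi_trans x : C x -> phi (trans C C' x) = s' x.
Proof. by move=> /trans_val [h _]; rewrite /trans iphiK. Qed.

Lemma trans_mono x y : C x -> C y -> x < y -> trans C C' x < trans C C' y.
Proof.
move=> Cx Cy xy; have [hx _] := trans_val Cx; have [hy _] := trans_val Cy.
apply: iphi_mono => //.
have d0 := lo_lt_hi nC; have d0' := lo_lt_hi nC'.
have : t x < t y by rewrite /t ltr_pM2r ?invr_gt0 ?subr_gt0 // ltrBlDr subrK phi_mono.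
by rewrite /s' ltrD2l => h; rewrite ltr_pM2r // subr_gt0.
Qed.
End Trans.


Lemma trans_inv (C C' : set R) : convex C -> nondeg C -> convex C' -> nondeg C' ->
  (hasMin C <-> hasMin C') -> (hasMax C <-> hasMax C') ->
  forall x, C x -> trans C' C (trans C C' x) = x.
Proof.
move=> cC nC cC' nC' tm tM x Cx.
rewrite {1}/trans (phi_trans nC cC' nC' tm tM Cx).
have d0 := lo_lt_hi nC; have d0' := lo_lt_hi nC'.
rewrite -[RHS]phiK; congr iphi; field.
by apply/andP; split; rewrite gt_eqF // subr_gt0.
Qed.


Lemma mono_cont (C C' : set R) (f : R -> R) : convex C' ->
  (forall x y, C x -> C y -> x < y -> f x < f y) ->
  (forall x, C x -> C' (f x)) ->
  (forall z, C' z -> exists x, C x /\ f x = z) ->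
  forall x e, C x -> 0 < e ->
  exists2 d, 0 < d & forall y, C y -> `|y - x| < d -> `|f y - f x| < e.
Proof.
move=> cC' mono into onto x e Cx e0.
have [d1 d10 H1] : exists2 d1, 0 < d1 &
    forall y, C y -> x < y -> y < x + d1 -> f y < f x + e.
  case: (pselect (exists y0, C y0 /\ x < y0)) => [[y0 [Cy0 xy0]]|nR].
  - case: (ltP (f y0) (f x + e)) => h.
    + exists (y0 - x); first lra.
      move=> y Cy xy yy0; have := mono _ _ Cy Cy0 ltac:(lra); lra.
    + have fx0 := mono _ _ Cx Cy0 xy0.
      have Cw : C' (f x + e / 2) by apply: (cC' _ _ _ (into _ Cx) (into _ Cy0)); lra.
      have [x' [Cx' fx']] := onto _ Cw.
      have xx' : x < x'.
        rewrite ltNge; apply/negP; rewrite le_eqVlt => /orP[/eqP ex|lt].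
        * by move: fx'; rewrite ex; lra.
        * by have := mono _ _ Cx' Cx lt; lra.
      exists (x' - x); first lra.
      by move=> y Cy xy yx'; have := mono _ _ Cy Cx' ltac:(lra); lra.
  - by exists 1 => // y Cy xy; exfalso; apply: nR; exists y.
have [d2 d20 H2] : exists2 d2, 0 < d2 &
    forall y, C y -> y < x -> x - d2 < y -> f x - e < f y.
  case: (pselect (exists y0, C y0 /\ y0 < x)) => [[y0 [Cy0 y0x]]|nL].
  - case: (ltP (f x - e) (f y0)) => h.
    + exists (x - y0); first lra.
      move=> y Cy yx y0y; have := mono _ _ Cy0 Cy ltac:(lra); lra.
    + have fx0 := mono _ _ Cy0 Cx y0x.
      have Cw : C' (f x - e / 2) by apply: (cC' _ _ _ (into _ Cy0) (into _ Cx)); lra.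
      have [x' [Cx' fx']] := onto _ Cw.
      have xx' : x' < x.
        rewrite ltNge; apply/negP; rewrite le_eqVlt => /orP[/eqP ex|lt].
        * by move: fx'; rewrite ex; lra.
        * by have := mono _ _ Cx Cx' lt; lra.
      exists (x - x'); first lra.
      by move=> y Cy yx x'y; have := mono _ _ Cx' Cy ltac:(lra); lra.
  - by exists 1 => // y Cy yx; exfalso; apply: nL; exists y.
exists (Num.min d1 d2); first by rewrite lt_min d10 d20.
move=> y Cy; rewrite lt_min => /andP[h1 h2]; rewrite ltr_distl.
move: h1 h2; rewrite !ltr_distl => /andP[h1 h1'] /andP[h2 h2'].
case: (ltgtP y x) => [yx|xy|->]; last by apply/andP; split; lra.
- have := mono _ _ Cy Cx yx; have := H2 _ Cy yx ltac:(lra); move=> ? ?; apply/andP; split; lra.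
- have := mono _ _ Cx Cy xy; have := H1 _ Cy xy ltac:(lra); move=> ? ?; apply/andP; split; lra.
Qed.

End Charts.

End MC.
Import MC.

Module MK.
Import Order.TTheory GRing.Theory Num.Theory.
Import numFieldTopology.Exports.
Local Open Scope classical_set_scope.
Local Open Scope ring_scope.
Local Open Scope card_scope.
Set Implicit Arguments. Unset Strict Implicit.

Section Split.
Variable R : realType.

Lemma countableU2 (A B : set R) : countable A -> countable B -> countable (A `|` B).
Proof.
move=> cA cB.
have -> : A `|` B = \bigcup_(b in [set: bool]) (if b then A else B).
  apply/seteqP; split => x.
  - by case=> h; [exists true|exists false].
  - by case=> -[] _ h; [left|right].
by apply: bigcup_countable => // -[].
Qed.

Lemma uncount_ne (A : set R) : ~ countable A -> exists x, A x.
Proof.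
move=> nA; apply: contrapT => h; apply: nA.
have -> : A = set0 by apply/seteqP; split => x // Ax; apply: h; exists x.
exact: countable0.
Qed.

Lemma uncount_sub (A B : set R) : ~ countable A -> A `<=` B -> ~ countable B.
Proof. by move=> nA AB cB; apply: nA; apply: sub_countable cB; exact: subset_card_le. Qed.

Lemma uncountD1 (A : set R) p : ~ countable A -> ~ countable (A `\ p).
Proof.
move=> nA cA; apply: nA; apply: sub_countable (countableU2 cA (countable1 p)).
apply: subset_card_le => x Ax; case: (eqVneq x p) => [->|xp]; [by right|left].
by split => // /= /eqP; rewrite (negbTE xp).
Qed.

Definition itv (I : R * R) := [set y | I.1 <= y <= I.2].

Lemma split_ex (T : set R) (eps e : R) : ~ countable T -> 0 < eps ->
  exists J : (R * R) * (R * R), [/\ J.1.2 - J.1.1 <= eps, J.2.2 - J.2.1 <= eps,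
    ~ countable (T `&` itv J.1) /\ ~ countable (T `&` itv J.2),
    (forall y, itv J.1 y -> itv J.2 y -> False) &
    ~ itv J.1 e /\ ~ itv J.2 e].
Proof.
move=> nT eps0.
pose ooI (q : rat * rat) := [set y : R | ratr q.1 < y < ratr q.2].
pose NC := [set x | exists q, ooI q x /\ countable (T `&` ooI q)].
have cTNC : countable (T `&` NC).
  apply: sub_countable (bigcup_countable (D := [set q | countable (T `&` ooI q)])
    (F := fun q => T `&` ooI q) (countableP _) (fun q h => h)).
  by apply: subset_card_le => x [Tx [q [oq cq]]]; exists q => //.
have nK : ~ countable (T `\` NC).
  move=> cK; apply: nT; apply: sub_countable (countableU2 cK cTNC).
  apply: subset_card_le => x Tx; case: (pselect (NC x)) => h; [by right|by left].
have cond p r : (T `\` NC) p -> 0 < r -> ~ countable (T `&` itv (p - r, p + r)).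
  move=> [Tp nNC] r0.
  have [q1] : exists q1, ratr q1 \in `](p - r), p[ by apply: rat_in_itvoo; lra.
  rewrite in_itv /= => /andP[q1a q1b].
  have [q2] : exists q2, ratr q2 \in `]p, (p + r)[ by apply: rat_in_itvoo; lra.
  rewrite in_itv /= => /andP[q2a q2b].
  have nc : ~ countable (T `&` ooI (q1, q2)).
    by move=> c; apply: nNC; exists (q1, q2); split => //=; apply/andP; split.
  apply: (uncount_sub nc) => y [Ty /andP[y1 y2]]; split => //=; move: y1 y2 => /= y1 y2; rewrite /itv /=; apply/andP; split; lra.
have [p1 K1] := uncount_ne nK.
have nK1 := @uncountD1 _ p1 nK.
have [p2 [K2 /= n21]] := uncount_ne nK1.
have nK2 := @uncountD1 _ p2 nK1.
have [p3 [[K3 /= n31] /= n32]] := uncount_ne nK2.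
have dpos (a b : R) : ~ a = b -> 0 < `|a - b| by move=> ab; rewrite normr_gt0 subr_eq0; apply/eqP.
have d12 := dpos _ _ (nesym n21); have d13 := dpos _ _ (nesym n31); have d23 := dpos _ _ (nesym n32).
pose r := Num.min (eps / 2) (Num.min (`|p1 - p2| / 3) (Num.min (`|p1 - p3| / 3) (`|p2 - p3| / 3))).
have r0 : 0 < r by rewrite !lt_min; apply/and4P; split; lra.
have := lexx r; rewrite {2}/r !le_min => /and4P[re r12 r13 r23].
have disj (a b : R) : 3 * r <= `|a - b| -> forall y, itv (a - r, a + r) y -> itv (b - r, b + r) y -> False.
  move=> h y /andP[/= ? ?] /andP[/= ? ?].
  have h1 : `|a - y| <= r by rewrite ler_distl; apply/andP; split; lra.
  have h2 : `|y - b| <= r by rewrite ler_distl; apply/andP; split; lra.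
  have := ler_distD y a b; lra.
have D12 : 3 * r <= `|p1 - p2| by lra.
have D13 : 3 * r <= `|p1 - p3| by lra.
have D23 : 3 * r <= `|p2 - p3| by lra.
have L (a : R) : (a + r) - (a - r) <= eps by lra.
case: (pselect (itv (p1 - r, p1 + r) e)) => e1.
  exists ((p2 - r, p2 + r), (p3 - r, p3 + r)); split => //=.
  - by split; apply: cond.
  - exact: disj D23.
  - by split => h; [exact: disj D12 _ e1 h|exact: disj D13 _ e1 h].
case: (pselect (itv (p2 - r, p2 + r) e)) => e2.
  exists ((p1 - r, p1 + r), (p3 - r, p3 + r)); split => //=.
  - by split; apply: cond.
  - exact: disj D13.
  - by split => // h; exact: disj D23 _ e2 h.
exists ((p1 - r, p1 + r), (p2 - r, p2 + r)); split => //=.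
- by split; apply: cond.
- exact: disj D12.
Qed.

Definition cut (x : R) : nat -> bool :=
  fun n => `[< ratr (odflt (0 : rat) (unpickle n)) < x >].

Lemma cut_inj : injective cut.
Proof.
have key x y : x < y -> cut x <> cut y.
  move=> xy e; have [q] := rat_in_itvoo xy; rewrite in_itv /= => /andP[h1 h2].
  have := congr1 (fun f => f (pickle q)) e; rewrite /cut /= pickleK /=.
  case: (asboolP (ratr q < x)) => hx; first by lra.
  by case: (asboolP (ratr q < y)).
move=> x y e; case: (ltgtP x y) => // h; exfalso; [exact: (key _ _ h e) | exact: (key _ _ h (esym e))].
Qed.

Lemma R_le_bits : [set: R] #<= [set: nat -> bool].
Proof.
apply/pcard_leP; apply/injfunPex; exists cut => //.
by move=> x y _ _; exact: cut_inj.
Qed.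
End Split.

Section Card.
Unset Implicit Arguments.
Variable R : realType.
Local Notation Eta := (@Defs.eta R).
Variable tau : set (set R).
Hypothesis Htop : is_topology tau.
Hypothesis Hfin : Eta `<=` tau.
Hypothesis Hlc : locally_connected_top tau.

Definition Sng := [set x | forall y, cmp tau x y -> y = x].

Lemma nS_rat x : ~ Sng x -> exists q : rat, cmp tau x (ratr q).
Proof.
move=> /existsNP [y /not_implyP [cxy nyx]].
case: (ltgtP y x) => [yx|xy|e]; last by [].
- have [q] := rat_in_itvoo yx; rewrite in_itv /= => /andP[h1 h2].
  by exists q; exact: (comp_convex Hfin cxy (comp_refl tau x) h1 h2).
- have [q] := rat_in_itvoo xy; rewrite in_itv /= => /andP[h1 h2].
  by exists q; exact: (comp_convex Hfin (comp_refl tau x) cxy h1 h2).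
Qed.

Definition ridx x := pickle (xget (0 : rat) [set q : rat | cmp tau x (ratr q)]).

Lemma ridx_comp x y : ~ Sng x -> ~ Sng y -> ridx x = ridx y -> cmp tau x y.
Proof.
move=> nx ny /(pcan_inj pickleK) e.
have hx := xgetPex 0 (nS_rat _ nx); have hy := xgetPex 0 (nS_rat _ ny).
rewrite /= e in hx; exact: comp_trans hx (comp_sym hy).
Qed.

Lemma comp_ridx x y : cmp tau x y -> ridx x = ridx y.
Proof. by move=> /comp_eq; rewrite /ridx => ->. Qed.

Definition E := [set x | ~ Sng x /\ ~ inner tau x].

Lemma E_countable : countable E.
Proof.
apply/countable_injP.
exists (fun x => pickle (ridx x, `[< forall y, cmp tau x y -> x <= y >])).
move=> x y; rewrite !inE => -[nSx Ix] [nSy Iy] /(pcan_inj pickleK) [/(ridx_comp _ _ nSx nSy) cxy eb].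
have cyx := comp_sym cxy.
have Gx : Gamma tau x by rewrite (GammaE Htop Hfin Hlc).
have Gy : Gamma tau y by rewrite (GammaE Htop Hfin Hlc).
case: (pselect (forall z, cmp tau x z -> x <= z)) => hx.
- have hy : forall z, cmp tau y z -> y <= z.
    by apply/asboolP; rewrite -eb; apply/asboolP.
  by apply/le_anti; rewrite hx // hy.
- have hy : ~ (forall z, cmp tau y z -> y <= z).
    by move=> hy; apply: hx; apply/asboolP; rewrite eb; apply/asboolP.
  case: (Gamma_side Htop Hfin Hlc Gx) => // hx'; case: (Gamma_side Htop Hfin Hlc Gy) => // hy'.
  by apply/le_anti; rewrite hx' // hy'.
Qed.

Definition fE := projT1 (cid (elimT (countable_injP E) E_countable)).
Lemma fE_inj : {in E &, injective fE}.
Proof. exact: (projT2 (cid (elimT (countable_injP E) E_countable))). Qed.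

Definition enumE n := xget 0 [set x | E x /\ fE x = n].

Lemma enumE_surj x : E x -> enumE (fE x) = x.
Proof.
move=> Ex; have [Ey e] : E (enumE (fE x)) /\ fE (enumE (fE x)) = fE x.
  by apply: (xgetPex 0 (P := [set y | E y /\ fE y = fE x])); exists x.
by apply: fE_inj => //; rewrite inE.
Qed.


Hypothesis nS : ~ countable Sng.

Lemma start : exists k : nat, ~ countable (Sng `&` itv (- k%:R, k%:R)).
Proof.
apply: contrapT => /forallNP H; apply: nS.
have : countable (\bigcup_(k in [set: nat]) (Sng `&` itv (- k%:R, k%:R))).
  by apply: bigcup_countable => // k _; apply: contrapT; exact: H.
apply: sub_countable; apply: subset_card_le => x Sx.
exists (Num.Def.archi_bound `|x|) => //; split => //; rewrite /itv /=.
by rewrite -ler_norml; apply: ltW; apply: archi_boundP.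
Qed.

Definition k0 := projT1 (cid start).
Definition I0 : R * R := (- k0%:R, k0%:R).
Lemma I0_spec : ~ countable (Sng `&` itv I0).
Proof. exact: projT2 (cid start). Qed.

Definition epsn (n : nat) : R := (n.+1%:R)^-1.
Lemma epsn_gt0 n : 0 < epsn n.
Proof. by rewrite invr_gt0 ltr0n. Qed.

Definition child n (I : R * R) : (R * R) * (R * R) :=
  match pselect (~ countable (Sng `&` itv I)) with
  | left P => projT1 (cid (split_ex (enumE n) P (epsn_gt0 n)))
  | right _ => (I, I)
  end.

Lemma child_spec n I : ~ countable (Sng `&` itv I) ->
  let J := child n I in
  [/\ J.1.2 - J.1.1 <= epsn n, J.2.2 - J.2.1 <= epsn n,
    ~ countable ((Sng `&` itv I) `&` itv J.1) /\ ~ countable ((Sng `&` itv I) `&` itv J.2),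
    (forall y, itv J.1 y -> itv J.2 y -> False) &
    ~ itv J.1 (enumE n) /\ ~ itv J.2 (enumE n)].
Proof.
move=> P0; rewrite /child; case: pselect => [P|//].
exact: (projT2 (cid (split_ex (enumE n) P (epsn_gt0 n)))).
Qed.

Definition clip (I J : R * R) : R * R := (Num.max I.1 J.1, Num.min I.2 J.2).

Lemma itv_clip I J : itv (clip I J) = itv I `&` itv J.
Proof.
apply/seteqP; split => y; rewrite /itv /= ge_max le_min.
- by case/andP => /andP[-> ->] /andP[-> ->].
- by case => /andP[-> ->] /andP[-> ->].
Qed.

Fixpoint node (x : nat -> bool) (n : nat) : R * R :=
  if n is m.+1 then clip (node x m) ((if x m then snd else fst) (child m (node x m)))
  else I0.

Lemma node_unc x n : ~ countable (Sng `&` itv (node x n)).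
Proof.
elim: n => [|n IH] /=; first exact: I0_spec.
have [_ _ [u1 u2] _ _] := child_spec n _ IH.
by rewrite itv_clip setIA; case: (x n).
Qed.

Lemma node_sub x n : itv (node x n.+1) `<=` itv (node x n).
Proof. by rewrite /= itv_clip; apply: subIsetl. Qed.

Lemma node_subn x m n : (m <= n)%N -> itv (node x n) `<=` itv (node x m).
Proof.
elim: n => [|n IH]; first by rewrite leqn0 => /eqP ->.
rewrite leq_eqVlt => /orP[/eqP -> //|]; rewrite ltnS => /IH h.
by move=> z /(@node_sub x n) /h.
Qed.

Lemma node_len x n y z : itv (node x n.+1) y -> itv (node x n.+1) z -> `|y - z| <= epsn n.
Proof.
have [_ _ [u1 u2] _ _] := child_spec n _ (node_unc x n).
have [l1 l2 _ _ _] := child_spec n _ (node_unc x n).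
rewrite /= itv_clip => -[_ hy] [_ hz].
move: hy hz l1 l2; case: (x n) => /= /andP[y1 y2] /andP[z1 z2] l1 l2;
  rewrite ler_distl; apply/andP; split; lra.
Qed.

Lemma node_avoid x n : ~ itv (node x n.+1) (enumE n).
Proof.
have [_ _ _ _ [a1 a2]] := child_spec n _ (node_unc x n).
by rewrite /= itv_clip => -[_]; case: (x n).
Qed.

Lemma node_disj x y n : node x n = node y n -> x n != y n ->
  forall z, itv (node x n.+1) z -> itv (node y n.+1) z -> False.
Proof.
move=> e ne z; rewrite /= !itv_clip e => -[_ h1] [_ h2].
have [_ _ _ D _] := child_spec n _ (node_unc y n).
by move: ne h1 h2; case: (x n); case: (y n) => //= _ h1 h2; [exact: D h2 h1|exact: D h1 h2].
Qed.

Lemma node_le x n : (node x n).1 <= (node x n).2.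
Proof.
have [z [_ /andP[h1 h2]]] := uncount_ne (node_unc x n); exact: le_trans h1 h2.
Qed.

Definition pt x := sup [set (node x n).1 | n in [set: nat]].

Lemma pt_in x n : itv (node x n) (pt x).
Proof.
have L m : itv (node x m) (node x m).1 by rewrite /itv /= lexx node_le.
have ub m k : (node x m).1 <= (node x k).2.
  have h1 := node_subn x m (maxn m k) (leq_maxl m k) _ (L (maxn m k)).
  have h2 := node_subn x k (maxn m k) (leq_maxr m k) _ (L (maxn m k)).
  by case/andP: h1 => a _; case/andP: h2 => _ b; exact: le_trans a b.
have hs : has_sup [set (node x n).1 | n in [set: nat]].
  split; first by exists (node x 0).1, 0%N.
  by exists (node x 0).2 => _ [m _ <-]; exact: ub.
rewrite /itv /=; apply/andP; split.
- by apply: (sup_upper_bound hs); exists n.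
- by apply: ge_sup; [case: hs|move=> _ [m _ <-]; exact: ub].
Qed.

Lemma pt_S x : Sng (pt x).
Proof.
apply: contrapT => nSp.
case: (pselect (inner tau (pt x))) => [[d d0 Hd]|nI].
- pose n := Num.Def.archi_bound d^-1.
  have hn : epsn n < d.
    have dpos : 0 <= d^-1 by rewrite invr_ge0 ltW.
    have := archi_boundP dpos; rewrite -/n => h.
    rewrite /epsn -[d]invrK ltf_pV2 ?posrE ?invr_gt0 ?ltr0n //.
    by apply: lt_trans h _; rewrite ltr_nat.
  have [s [Ss hs]] := uncount_ne (node_unc x n.+1).
  have cs : cmp tau (pt x) s.
    by apply: Hd; have := node_len x n s (pt x) hs (pt_in x n.+1); rewrite distrC; lra.
  apply: nSp => y cy; have e := Ss _ (comp_sym cs).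
  by rewrite e in cy *; apply: Ss.
- have Ep : E (pt x) by split.
  apply: (node_avoid x (fE (pt x))); rewrite enumE_surj //; exact: pt_in.
Qed.

Lemma pt_inj : injective pt.
Proof.
move=> x y e; apply: contrapT => ne.
have ex : exists i, x i != y i.
  apply: contrapT => /forallNP h; apply: ne; apply/funext => i.
  by apply/eqP; apply: contrapT => /negP; exact: h.
case: (ex_minnP ex) => m hm minm.
have agree k : (k <= m)%N -> node x k = node y k.
  elim: k => [//|k IH] km /=; rewrite IH ?(ltnW km) //.
  have -> : x k = y k.
    by apply/eqP; apply: contraTT km => /minm; rewrite -leqNgt.
  by [].
apply: (node_disj x y m (agree m (leqnn m)) hm (pt x) (pt_in x m.+1)).
rewrite e; exact: pt_in.
Qed.

Lemma bits_le_S : [set: nat -> bool] #<= Sng.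
Proof.
apply/pcard_leP; apply/injfunPex; exists pt.
- by move=> x _; exact: pt_S.
- by move=> x y _ _; exact: pt_inj.
Qed.

Lemma Sng_card : Sng #= [set: R].
Proof.
apply: Cantor_Bernstein; first exact: subset_card_le.
exact: card_le_trans (R_le_bits R) bits_le_S.
Qed.

End Card.

End MK.
Import MK.

Module MH.
Import Order.TTheory GRing.Theory Num.Theory.
Import numFieldTopology.Exports.
Local Open Scope classical_set_scope.
Local Open Scope ring_scope.
Local Open Scope card_scope.
Set Implicit Arguments. Unset Strict Implicit.

Section Homeo.
Variable R : realType.
Local Notation Eta := (@Defs.eta R).

Definition good (tau : set (set R)) :=
  [/\ is_topology tau, Eta `<=` tau & locally_connected_top tau].

Lemma cmp_convex tau : good tau -> forall x, convex (cmp tau x).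
Proof. by case=> _ Hfin _ x a b z ca cb az zb; exact: (comp_convex Hfin ca cb az zb). Qed.

Lemma nondeg_nS tau x : ~ Sng R tau x -> nondeg (cmp tau x).
Proof.
move=> /existsNP [y /not_implyP [cxy nyx]].
case: (ltgtP y x) => [yx|xy|e] //.
- by exists y, x; split => //; exact: comp_refl.
- by exists x, y; split => //; exact: comp_refl.
Qed.

Lemma nondeg_S tau x : nondeg (cmp tau x) -> ~ Sng R tau x.
Proof.
move=> [y [z [cy cz yz]]] S; have ey := S _ cy; have ez := S _ cz.
by move: yz; rewrite ey ez ltxx.
Qed.

Definition ctype (C : set R) := (`[< hasMin C >], `[< hasMax C >]).

Lemma ctype_iff C C' : ctype C = ctype C' -> (hasMin C <-> hasMin C') /\ (hasMax C <-> hasMax C').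
Proof.
case=> e1 e2; split; split => h.
- by apply/asboolP; rewrite -e1; apply/asboolP.
- by apply/asboolP; rewrite e1; apply/asboolP.
- by apply/asboolP; rewrite -e2; apply/asboolP.
- by apply/asboolP; rewrite e2; apply/asboolP.
Qed.

Definition hmap tau1 (pi : set R -> set R) (sg : R -> R) x :=
  if `[< Sng R tau1 x >] then sg x else trans (cmp tau1 x) (pi (cmp tau1 x)) x.

Definition PiOK tau1 tau2 (pi : set R -> set R) := forall x, ~ Sng R tau1 x ->
  exists y, [/\ ~ Sng R tau2 y, pi (cmp tau1 x) = cmp tau2 y & ctype (cmp tau2 y) = ctype (cmp tau1 x)].
Definition SigOK tau1 tau2 (sg : R -> R) := forall x, Sng R tau1 x -> Sng R tau2 (sg x).

Lemma hmapS tau pi sg x : Sng R tau x -> hmap tau pi sg x = sg x.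
Proof. by move=> S; rewrite /hmap asboolT. Qed.

Lemma hmapN tau pi sg x : ~ Sng R tau x -> hmap tau pi sg x = trans (cmp tau x) (pi (cmp tau x)) x.
Proof. by move=> S; rewrite /hmap asboolF. Qed.

Variables tau1 tau2 : set (set R).
Hypotheses (G1 : good tau1) (G2 : good tau2).

Lemma hmap_nd pi sg x : PiOK tau1 tau2 pi -> ~ Sng R tau1 x ->
  [/\ hmap tau1 pi sg x = trans (cmp tau1 x) (pi (cmp tau1 x)) x,
      cmp tau2 (hmap tau1 pi sg x) = pi (cmp tau1 x),
      ~ Sng R tau2 (hmap tau1 pi sg x),
      exists y, [/\ ~ Sng R tau2 y, pi (cmp tau1 x) = cmp tau2 y & ctype (cmp tau2 y) = ctype (cmp tau1 x)]
    & (hasMin (cmp tau1 x) <-> hasMin (pi (cmp tau1 x))) /\ (hasMax (cmp tau1 x) <-> hasMax (pi (cmp tau1 x)))].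
Proof.
move=> P nS; have e : hmap tau1 pi sg x = trans (cmp tau1 x) (pi (cmp tau1 x)) x.
  by rewrite /hmap asboolF.
have [y [nSy ey ty]] := P x nS.
have [tm tM] := ctype_iff (esym ty).
have mem : cmp tau2 y (hmap tau1 pi sg x).
  rewrite e ey; apply: (trans_mem (nondeg_nS nS) (@cmp_convex tau2 G2 y) (nondeg_nS nSy) tm tM).
  exact: comp_refl.
have ec : cmp tau2 (hmap tau1 pi sg x) = pi (cmp tau1 x) by rewrite ey; exact/esym/comp_eq.
split => //.
- by apply: nondeg_S; rewrite ec ey; exact: nondeg_nS.
- by exists y.
- by rewrite ey.
Qed.


Lemma hmap_cancel pi sg pii sgi : PiOK tau1 tau2 pi -> SigOK tau1 tau2 sg ->
  (forall x, ~ Sng R tau1 x -> pii (pi (cmp tau1 x)) = cmp tau1 x) ->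
  (forall x, Sng R tau1 x -> sgi (sg x) = x) ->
  cancel (hmap tau1 pi sg) (hmap tau2 pii sgi).
Proof.
move=> P Sg Pi Si x; case: (pselect (Sng R tau1 x)) => S.
  by rewrite (hmapS _ _ S) (hmapS _ _ (Sg _ S)) Si.
have [e ec nS2 [y [nSy ey ty]] [tm tM]] := hmap_nd sg P S.
rewrite (hmapN _ _ nS2) ec Pi // e ey.
rewrite ey in tm tM.
exact: (trans_inv (@cmp_convex tau1 G1 x) (nondeg_nS S) (@cmp_convex tau2 G2 y)
  (nondeg_nS nSy) tm tM (comp_refl tau1 x)).
Qed.

Lemma hmap_cont pi sg : PiOK tau1 tau2 pi -> SigOK tau1 tau2 sg ->
  forall U, tau2 U -> tau1 (hmap tau1 pi sg @^-1` U).
Proof.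
move=> P Sg U tU; case: (G1) => [Ht1 Hf1 Hl1]; case: (G2) => [Ht2 Hf2 Hl2].
apply: (tau_char Ht1 Hf1 Hl1) => x /= Ux.
have [e e0 He] := local Ht2 Hf2 Hl2 tU Ux.
case: (pselect (Sng R tau1 x)) => S.
  by exists 1 => // y _ cy; rewrite (S _ cy).
have [hx ec nS2 [y0 [nSy ey ty]] [tm tM]] := hmap_nd sg P S.
rewrite ey in tm tM ec hx.
have cC' := @cmp_convex tau2 G2 y0; have nC := nondeg_nS S; have nC' := nondeg_nS nSy.
have cC := @cmp_convex tau1 G1 x.
have [d d0 Hd] := mono_cont (f := trans (cmp tau1 x) (cmp tau2 y0)) cC'
  (fun a b Ca Cb ab => trans_mono nC cC' nC' tm tM Ca Cb ab)
  (fun a Ca => trans_mem nC cC' nC' tm tM Ca)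
  (fun z Cz => ex_intro _ (trans (cmp tau2 y0) (cmp tau1 x) z)
     (conj (trans_mem nC' cC nC (iff_sym tm) (iff_sym tM) Cz)
           (trans_inv cC' nC' cC nC (iff_sym tm) (iff_sym tM) Cz)))
  (comp_refl tau1 x) e0.
exists d => // y hy cy.
have ecy := comp_eq cy.
have nSy1 : ~ Sng R tau1 y by apply: nondeg_S; rewrite -ecy.
have hy' : hmap tau1 pi sg y = trans (cmp tau1 x) (cmp tau2 y0) y by rewrite hmapN // -ecy ey.
apply: He.
- by rewrite hy' hx; exact: Hd.
- by rewrite ec hy'; exact: (trans_mem nC cC' nC' tm tM cy).
Qed.

End Homeo.

Lemma homeo (R : realType) (tau1 tau2 : set (set R)) pi sg pii sgi :
  good tau1 -> good tau2 ->
  PiOK tau1 tau2 pi -> SigOK tau1 tau2 sg -> PiOK tau2 tau1 pii -> SigOK tau2 tau1 sgi ->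
  (forall x, ~ Sng R tau1 x -> pii (pi (cmp tau1 x)) = cmp tau1 x) ->
  (forall x, Sng R tau1 x -> sgi (sg x) = x) ->
  (forall x, ~ Sng R tau2 x -> pi (pii (cmp tau2 x)) = cmp tau2 x) ->
  (forall x, Sng R tau2 x -> sg (sgi x) = x) ->
  homeomorphic_top tau1 tau2.
Proof.
move=> G1 G2 P1 S1 P2 S2 I1 J1 I2 J2.
exists (hmap tau1 pi sg), (hmap tau2 pii sgi); split.
- exact: hmap_cancel.
- exact: hmap_cancel.
- exact: hmap_cont.
- exact: hmap_cont.
Qed.


End MH.
Import MH.

Module MF.
Import Order.TTheory GRing.Theory Num.Theory.
Import numFieldTopology.Exports.
Local Open Scope classical_set_scope.
Local Open Scope ring_scope.
Local Open Scope card_scope.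
Set Implicit Arguments. Unset Strict Implicit.

Definition ccode {T} (A : set T) : option nat :=
  match pselect (finite_set A) with left P => Some (projT1 (cid P)) | right _ => None end.

Lemma ccode_eq {T U} (A : set T) (B : set U) : countable A -> countable B ->
  ccode A = ccode B -> A #= B.
Proof.
move=> cA cB; rewrite /ccode; case: pselect => [PA|nA]; case: pselect => [PB|nB] //.
- case=> e; have hA := projT2 (cid PA); have hB := projT2 (cid PB).
  rewrite /= e in hA; exact: card_eq_trans hA (card_esym hB).
- move=> _; exact: card_eq_trans (eq_card_nat cA nA) (card_esym (eq_card_nat cB nB)).
Qed.

Lemma bij_inv {T U : pointedType} (A : set T) (B : set U) : A #= B ->
  exists f g, [/\ forall a, A a -> B (f a), forall b, B b -> A (g b),
    forall a, A a -> g (f a) = a & forall b, B b -> f (g b) = b].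
Proof.
move=> /card_set_bijP [f [ff fi fs]].
pose g b := xget point [set a | A a /\ f a = b].
have gP b : B b -> A (g b) /\ f (g b) = b.
  move=> Bb; have [a Aa fab] := fs _ Bb.
  by apply: (xgetPex point (P := [set a | A a /\ f a = b])); exists a.
exists f, g; split.
- by move=> a Aa; exact: ff.
- by move=> b /gP [].
- move=> a Aa; have [Ag e] := gP _ (ff _ Aa).
  by apply: fi => //; rewrite inE.
- by move=> b /gP [].
Qed.

Section Codes.
Variable R : realType.

Definition Comps (tau : set (set R)) (t : bool * bool) :=
  [set C : set R | exists x, [/\ ~ Sng R tau x, C = cmp tau x & ctype C = t]].

Definition rpick (C : set R) : rat := xget 0 [set q : rat | C (ratr q)].

Lemma rpickP (C : set R) : (exists q : rat, C (ratr q)) -> C (ratr (rpick C)).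
Proof. by move=> h; apply: (xgetPex 0 (P := [set q : rat | C (ratr q)])). Qed.

Lemma Comps_countable tau t : good tau -> countable (Comps tau t).
Proof.
case=> _ Hfin _; apply/countable_injP.
exists (fun C => pickle (rpick C)).
move=> C1 C2; rewrite !inE => -[x1 [n1 -> _]] [x2 [n2 -> _]] /(pcan_inj pickleK) e.
have h1 : cmp tau x1 (ratr (rpick (cmp tau x1))) := @rpickP (cmp tau x1) (nS_rat R tau Hfin x1 n1).
have h2 : cmp tau x2 (ratr (rpick (cmp tau x2))) := @rpickP (cmp tau x2) (nS_rat R tau Hfin x2 n2).
rewrite e in h1.
exact: etrans (comp_eq h1) (esym (comp_eq h2)).
Qed.

Definition scode (A : set R) : option (option nat) :=
  match pselect (countable A) with left _ => Some (ccode A) | right _ => None end.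

Definition code (tau : set (set R)) :=
  (scode (Sng R tau), ccode (Comps tau (false, false)), ccode (Comps tau (false, true)),
   ccode (Comps tau (true, false)), ccode (Comps tau (true, true))).

Lemma same_code_homeo tau1 tau2 : good tau1 -> good tau2 -> code tau1 = code tau2 ->
  homeomorphic_top tau1 tau2.
Proof.
move=> G1 G2 [es e00 e01 e10 e11].
have SS : Sng R tau1 #= Sng R tau2.
  move: es; rewrite /scode; case: pselect => c1; case: pselect => c2 //.
  - by case=> e; exact: ccode_eq c1 c2 e.
  - move=> _; case: G1 => H1 H2 H3; case: G2 => H4 H5 H6.
    exact: card_eq_trans (Sng_card R tau1 H1 H2 H3 c1) (card_esym (Sng_card R tau2 H4 H5 H6 c2)).
have CC : forall t, Comps tau1 t #= Comps tau2 t.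
  move=> [[] []].
  - exact: (ccode_eq (@Comps_countable tau1 _ G1) (@Comps_countable tau2 _ G2) e11).
  - exact: (ccode_eq (@Comps_countable tau1 _ G1) (@Comps_countable tau2 _ G2) e10).
  - exact: (ccode_eq (@Comps_countable tau1 _ G1) (@Comps_countable tau2 _ G2) e01).
  - exact: (ccode_eq (@Comps_countable tau1 _ G1) (@Comps_countable tau2 _ G2) e00).
have [sg [sgi [s1 s2 s3 s4]]] := bij_inv SS.
have : forall t, exists fg : (set R -> set R) * (set R -> set R),
    [/\ forall a, Comps tau1 t a -> Comps tau2 t (fg.1 a),
        forall b, Comps tau2 t b -> Comps tau1 t (fg.2 b),
        forall a, Comps tau1 t a -> fg.2 (fg.1 a) = a &
        forall b, Comps tau2 t b -> fg.1 (fg.2 b) = b].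
  by move=> t; have [f [g H]] := bij_inv (CC t); exists (f, g).
move=> /choice [F HF].
pose pi C := (F (ctype C)).1 C.
pose pii C := (F (ctype C)).2 C.
have piM x : ~ Sng R tau1 x -> Comps tau2 (ctype (cmp tau1 x)) (pi (cmp tau1 x)).
  move=> nS; have [h1 _ _ _] := HF (ctype (cmp tau1 x)); apply: h1; by exists x.
have piiM x : ~ Sng R tau2 x -> Comps tau1 (ctype (cmp tau2 x)) (pii (cmp tau2 x)).
  move=> nS; have [_ h2 _ _] := HF (ctype (cmp tau2 x)); apply: h2; by exists x.
apply: (@homeo R tau1 tau2 pi sg pii sgi) => //.
- move=> x nS; have [y [nSy e ty]] := piM x nS.
  by exists y; split => //; rewrite -e.
- move=> x nS; have [y [nSy e ty]] := piiM x nS.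
  by exists y; split => //; rewrite -e.
- move=> x nS; have [y [nSy e ty]] := piM x nS.
  rewrite /pii ty; have [_ _ h3 _] := HF (ctype (cmp tau1 x)); apply: h3; by exists x.
- move=> x nS; have [y [nSy e ty]] := piiM x nS.
  rewrite /pi ty; have [_ _ _ h4] := HF (ctype (cmp tau2 x)); apply: h4; by exists x.
Qed.

End Codes.

Theorem theorem4_aux (R : realType) :
  (exists rep : nat -> set (set R),
     forall tau : set (set R),
       finer_than_eta tau -> locally_connected_top tau ->
       exists n : nat, homeomorphic_top tau (rep n))
  /\
  (forall tau : set (set R),
     finer_than_eta tau -> locally_connected_top tau -> separable_top tau ->
     (exists F : R -> R, tau = tau_of F) /\
     countable (Gamma tau) /\ @closed R^o (Gamma tau)).
Proof.
split.
- exists (fun n => xget setT [set tau | good tau /\ pickle (code tau) = n]).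
  move=> tau [Ht Hf] Hl; exists (pickle (code tau)).
  pose P : set (set (set R)) := [set tau' : set (set R) | good tau' /\ pickle (code tau') = pickle (code tau)].
  have : P (xget setT P) by apply: xgetPex; exists tau.
  move=> [G' e']; rewrite -/P.
  apply: same_code_homeo => //.
  exact/esym/(pcan_inj pickleK e').
- move=> tau [Ht Hf] Hl [D [Dc Dd]]; split; last split.
  + by eexists; exact: (tau_graph Ht Hf Hl Dc Dd).
  + exact: Gamma_countable Ht Hf Hl D Dc Dd.
  + exact: Gamma_closed.
Qed.

End MF.
Import MF.

Local Open Scope classical_set_scope.

Theorem theorem4 (R : realType) :
  (* (a) at most countably many homeomorphism classes *)
  (exists rep : nat -> set (set R),
     forall tau : set (set R),
       finer_than_eta tau -> locally_connected_top tau ->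
       exists n : nat, homeomorphic_top tau (rep n))
  /\
  (* (b) *)
  (forall tau : set (set R),
     finer_than_eta tau -> locally_connected_top tau -> separable_top tau ->
     (exists F : R -> R, tau = tau_of F) /\
     countable (Gamma tau) /\ @closed R^o (Gamma tau)).
Proof. exact: theorem4_aux. Qed.
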